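(* For integers $m,l\ge0$ let $B_{ml}=ML^{m+1}\hat L^{-l}+(-1)^{l+m}\hat L^{-l}L^mML$ and $\hat B_{ml}=L^m\hat L^{-l+1}\hat M+(-1)^{l+m}\hat L\hat M\hat L^{-l}L^m$. Then for $\bar B_{ml}=B_{ml}$ or $\hat B_{ml}$ and every odd $k\ge1$, $$\frac{\partial\bar B_{ml}}{\partial t_k}=[(L^k)_+,\bar B_{ml}],\qquad \frac{\partial\bar B_{ml}}{\partial \hat t_k}=[-(\hat L^k)_-,\bar B_{ml}].$$
   Context: Setting: the two-component BKP hierarchy. $D=d/dx$; pseudo-differential operators multiply via $D^i f=\sum_{r\ge0}\binom{i}{r}D^r(f)D^{i-r}$; $A_\pm$ are the parts of $A=\sum f_iD^i$ with $i\ge0$, resp. $i<0$; $A^*=\sum(-D)^if_i$. Dressing operators $\Phi=1+\sum_{i\ge1}a_iD^{-i}$, $\hat\Phi=1+\sum_{i\ge1}b_iD^i$, depending on $t=(t_1,t_3,\dots)$, $\hat t=(\hat t_1,\hat t_3,\dots)$, $t_1=x$, with $\Phi^*=D\Phi^{-1}D^{-1}$, $\hat\Phi^*=D\hat\Phi^{-1}D^{-1}$; Lax operators $L=\Phi D\Phi^{-1}$, $\hat L=\hat\Phi D^{-1}\hat\Phi^{-1}$; flows (odd $k$): $\partial_{t_k}\Phi=-(L^k)_-\Phi$, $\partial_{t_k}\hat\Phi=((L^k)_+-\delta_{k1}\hat L^{-1})\hat\Phi$, $\partial_{\hat t_k}\Phi=-(\hat L^k)_-\Phi$, $\partial_{\hat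 t_k}\hat\Phi=(\hat L^k)_+\hat\Phi$. Orlov–Schulman operators $M=\Phi\Gamma\Phi^{-1}$, $\hat M=\hat\Phi\hat\Gamma\hat\Phi^{-1}$, $\Gamma=\sum_{k\ \mathrm{odd}}kt_kD^{k-1}$, $\hat\Gamma=x+\sum_{k\ \mathrm{odd}}k\hat t_kD^{-k-1}$. *)

(* Defs.v *)
From HB Require Import structures.
From mathcomp Require Import all_boot all_order all_algebra.
Set Implicit Arguments.
Unset Strict Implicit.
Unset Printing Implicit Defensive.
Import GRing.Theory Num.Theory.
Local Open Scope ring_scope.

Definition comm (Op : ringType) (A B : Op) : Op := A * B - B * A.

Definition is_derivation (Op : ringType) (d : Op -> Op) : Prop :=
  (forall A B, d (A + B) = d A + d B) /\ (forall A B, d (A * B) = d A * B + A * d B).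

(* Data of an (abstract) algebra of pseudo-differential operators in which
   all products occurring in the paper exist. *)
Record PsdoData (Op : unitRingType) := {
  Dop   : Op;               (* D = d/dx *)
  pplus : Op -> Op;
  adj   : Op -> Op;
  dt    : nat -> Op -> Op;  (* d/dt_k  acting on coefficients *)
  dth   : nat -> Op -> Op;  (* d/dhat t_k acting on coefficients *)
  Gam   : Op;               (* Gamma = sum_{k odd} k t_k D^(k-1) *)
  hGam  : Op                (* hat Gamma = x + sum_{k odd} k hat t_k D^(-k-1) *)
}.

Definition pminus (Op : unitRingType) (S : PsdoData Op) (A : Op) : Op :=
  A - pplus S A.

Record PsdoAxioms (Op : unitRingType) (S : PsdoData Op) : Prop := {
  D_unit : Dop S \is a GRing.unit;
  pplus_add : forall A B, pplus S (A + B) = pplus S A + pplus S B;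
  pplus_idem : forall A, pplus S (pplus S A) = pplus S A;
  pplus_Dpow : forall i : int,
      pplus S (Dop S ^ i) = if (0 <= i)%R then Dop S ^ i else 0;
  adj_add : forall A B, adj S (A + B) = adj S A + adj S B;
  adj_mul : forall A B, adj S (A * B) = adj S B * adj S A;
  adj_invol : forall A, adj S (adj S A) = A;
  adj_D : adj S (Dop S) = - Dop S;
  dt_der : forall k, is_derivation (dt S k);
  dth_der : forall k, is_derivation (dth S k);
  dt_D : forall k, dt S k (Dop S) = 0;
  dth_D : forall k, dth S k (Dop S) = 0;
  (* t_1 = x : d/dt_1 acts on coefficients as d/dx *)
  dt1_ad : forall A, dt S 1 A = comm (Dop S) A;
  (* the coefficients of Gamma: x (at D^0) and x-independent k t_k (k>=3) *)
  Gam_comm : comm (Dop S) (Gam S) = 1;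
  Gam_dt : forall k, odd k -> dt S k (Gam S) = k%:R * Dop S ^+ k.-1;
  Gam_dth : forall k, odd k -> dth S k (Gam S) = 0;
  (* the coefficients of hat Gamma: x (at D^0) and x-independent k hat t_k *)
  hGam_comm : comm (Dop S) (hGam S) = 1;
  hGam_dt : forall k, odd k -> dt S k (hGam S) = (k == 1)%:R;
  hGam_dth : forall k, odd k ->
      dth S k (hGam S) = k%:R * Dop S ^ (- (k.+1 : int))
}.

Section Ops.
Variables (Op : unitRingType) (S : PsdoData Op).
Local Notation D := (Dop S).

Definition LaxL (Phi : Op) : Op := Phi * D * Phi^-1.
Definition LaxLh (hPhi : Op) : Op := hPhi * D^-1 * hPhi^-1.
Definition OSM (Phi : Op) : Op := Phi * Gam S * Phi^-1.
Definition OSMh (hPhi : Op) : Op := hPhi * hGam S * hPhi^-1.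

Definition Bml (Phi hPhi : Op) (m l : nat) : Op :=
  OSM Phi * LaxL Phi ^+ m.+1 * LaxLh hPhi ^ (- (l : int))
  + (-1) ^+ (l + m) * (LaxLh hPhi ^ (- (l : int)) * LaxL Phi ^+ m
                        * OSM Phi * LaxL Phi).

Definition hBml (Phi hPhi : Op) (m l : nat) : Op :=
  LaxL Phi ^+ m * LaxLh hPhi ^ (1 - (l : int)) * OSMh hPhi
  + (-1) ^+ (l + m) * (LaxLh hPhi * OSMh hPhi * LaxLh hPhi ^ (- (l : int))
                        * LaxL Phi ^+ m).

Definition BKP2_dressing (Phi hPhi : Op) : Prop :=
  [/\ Phi \is a GRing.unit, hPhi \is a GRing.unit,
      (* Phi = 1 + sum_{i>=1} a_i D^-i ; hPhi = 1 + sum_{i>=1} b_i D^i *)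
      pplus S Phi = 1, pminus S hPhi = 0 &
      adj S Phi = D * Phi^-1 * D^-1 /\ adj S hPhi = D * hPhi^-1 * D^-1].

Definition BKP2_flows (Phi hPhi : Op) : Prop :=
  forall k : nat, odd k ->
  [/\ dt S k Phi = - pminus S (LaxL Phi ^+ k) * Phi,
      dt S k hPhi = (pplus S (LaxL Phi ^+ k) - (k == 1)%:R * (LaxLh hPhi)^-1) * hPhi,
      dth S k Phi = - pminus S (LaxLh hPhi ^+ k) * Phi &
      dth S k hPhi = pplus S (LaxLh hPhi ^+ k) * hPhi].

End Ops.

(* Main.v *)
Require Import Defs.
From HB Require Import structures.
From mathcomp Require Import all_boot all_order all_algebra.
Import GRing.Theory.
Local Open Scope ring_scope.

Section Gen.
Variables (Op : unitRingType) (d : Op -> Op).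
Hypothesis Hd : is_derivation d.

Lemma d_add A B : d (A + B) = d A + d B. Proof. exact: Hd.1. Qed.
Lemma d_mul A B : d (A * B) = d A * B + A * d B. Proof. exact: Hd.2. Qed.

Lemma self0 (x : Op) : x + x = x -> x = 0.
Proof. by move=> h; apply: (addrI x); rewrite h addr0. Qed.

Lemma d0 : d 0 = 0.
Proof. by apply: self0; rewrite -d_add addr0. Qed.

Lemma dN A : d (- A) = - d A.
Proof. by apply/eqP; rewrite -addr_eq0 -d_add addrC subrr d0. Qed.

Lemma d1 : d 1 = 0.
Proof.
have := d_mul 1 1; rewrite !mul1r mulr1 => H.
by apply: self0; rewrite {3}H.
Qed.

Lemma dV A : A \is a GRing.unit -> d (A^-1) = - (A^-1 * d A * A^-1).
Proof.
move=> uA.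
have := d_mul A A^-1; rewrite mulrV // d1 => /esym /eqP; rewrite addr_eq0 => /eqP H.
have -> : d A^-1 = A^-1 * (A * d A^-1) by rewrite mulKr.
have H2 : A * d A^-1 = - (d A * A^-1) by rewrite H opprK.
by rewrite H2 mulrN mulrA.
Qed.

Lemma d_conj Phi A Y : Phi \is a GRing.unit -> d Phi = A * Phi ->
  d (Phi * Y * Phi^-1) = comm A (Phi * Y * Phi^-1) + Phi * d Y * Phi^-1.
Proof.
move=> uP dP.
rewrite !d_mul dV // dP /comm.
rewrite mulrDl !mulrN !mulrA mulrK //.
by rewrite addrAC.
Qed.

Variable P : Op.
Definition good X := d X = comm P X.

Lemma comm_mul X Y : comm P (X * Y) = comm P X * Y + X * comm P Y.
Proof.
rewrite /comm mulrBl mulrBr !mulrA.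
by rewrite addrA subrK.
Qed.

Lemma good_add X Y : good X -> good Y -> good (X + Y).
Proof. by rewrite /good /comm d_add => -> ->; rewrite mulrDr mulrDl opprD addrACA. Qed.

Lemma good_mul X Y : good X -> good Y -> good (X * Y).
Proof. by rewrite /good d_mul comm_mul => -> ->. Qed.

Lemma good_1 : good 1.
Proof. by rewrite /good d1 /comm mulr1 mul1r subrr. Qed.

Lemma good_m1 : good (-1).
Proof. by rewrite /good dN d1 /comm mulrN1 mulN1r subrr oppr0. Qed.

Lemma good_exp X n : good X -> good (X ^+ n).
Proof.
move=> gX; elim: n => [|n IH]; first by rewrite expr0; exact: good_1.
by rewrite exprS; apply: good_mul.
Qed.

Lemma good_inv X : X \is a GRing.unit -> good X -> good (X^-1).
Proof.
move=> uX gX; rewrite /good dV // gX /comm.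
rewrite mulrBr mulrBl !mulrA mulVr // mul1r mulrK //.
by rewrite opprB.
Qed.

Lemma good_expz X (z : int) : X \is a GRing.unit -> good X -> good (X ^ z).
Proof.
move=> uX gX; case: z => n.
  by rewrite -exprnP; apply: good_exp.
rewrite NegzE -exprnN; apply: good_inv; first by rewrite unitrX.
exact: good_exp.
Qed.

End Gen.
Arguments good {Op} d P X.
Arguments d_conj {Op d} Hd Phi A Y.
Arguments dV {Op d} Hd A.
Arguments good_add {Op d} Hd P X Y.
Arguments good_mul {Op d} Hd P X Y.
Arguments good_exp {Op d} Hd P X n.
Arguments good_expz {Op d} Hd P X z.
Arguments good_m1 {Op d} Hd P.

Lemma comm_conj (Op : unitRingType) (Phi X Y : Op) : Phi \is a GRing.unit ->
  comm (Phi * X * Phi^-1) (Phi * Y * Phi^-1) = Phi * comm X Y * Phi^-1.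
Proof.
move=> u; rewrite /comm !mulrBr !mulrBl !mulrA !mulrVK //.
Qed.

Lemma conj_exp (Op : unitRingType) (Phi X : Op) n : Phi \is a GRing.unit ->
  (Phi * X * Phi^-1) ^+ n = Phi * X ^+ n * Phi^-1.
Proof.
move=> u; elim: n => [|n IH]; first by rewrite !expr0 mulr1 mulrV.
by rewrite exprS IH !mulrA mulrVK // -(mulrA _ X) -exprS.
Qed.

Lemma comm_Dpow (Op : unitRingType) (D X : Op) n : comm D X = 1 ->
  comm (D ^+ n.+1) X = n.+1%:R * D ^+ n.
Proof.
move=> h; elim: n => [|n IH]; first by rewrite expr1 expr0 mulr1 h.
have -> : comm (D ^+ n.+2) X = D * comm (D ^+ n.+1) X + comm D X * D ^+ n.+1.
  rewrite [in LHS]exprS /comm mulrBr mulrBl !mulrA.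
  by rewrite addrA subrK.
rewrite IH h mul1r mulrA (commr_nat D n.+1) -mulrA -exprS.
by rewrite -{2}(mul1r (D ^+ n.+1)) -mulrDl natr1.
Qed.

Lemma comm_Dinvpow (Op : unitRingType) (D X : Op) n : D \is a GRing.unit ->
  comm D X = 1 -> comm (D^-1 ^+ n) X = - (n%:R * D^-1 ^+ n.+1).
Proof.
move=> u h.
have h1 : comm (D^-1) X = - (D^-1 ^+ 2).
  have -> : comm D^-1 X = D^-1 * (- comm D X) * D^-1.
    rewrite /comm opprB mulrBr mulrBl !mulrA mulrK // mulVr // mul1r.
  by [].   by rewrite h mulrN1 mulNr expr2.
elim: n => [|n IH]; first by rewrite expr0 mul0r oppr0 /comm mulr1 mul1r subrr.
have -> : comm (D^-1 ^+ n.+1) X = D^-1 * comm (D^-1 ^+ n) X + comm D^-1 X * D^-1 ^+ n.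
  rewrite [in LHS]exprS /comm mulrBr mulrBl !mulrA.
  by rewrite addrA subrK.
rewrite IH h1 mulrN mulrA (commr_nat D^-1 n) -mulrA -exprS.
rewrite mulNr -exprD add2n -opprD; congr (- _).
by rewrite -{2}(mul1r (D^-1 ^+ n.+2)) -mulrDl natr1.
Qed.

Lemma comm_addl (Op : ringType) (A B X : Op) : comm (A + B) X = comm A X + comm B X.
Proof. by rewrite /comm mulrDl mulrDr opprD addrACA. Qed.

Lemma comm0 (Op : ringType) (X : Op) : comm 0 X = 0.
Proof. by rewrite /comm mul0r mulr0 subrr. Qed.

Lemma comm_oppl (Op : ringType) (A X : Op) : comm (- A) X = - comm A X.
Proof. by rewrite /comm mulNr mulrN opprB opprK addrC. Qed.

Lemma comm_self_exp (Op : ringType) (A : Op) n : comm (A ^+ n) A = 0.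
Proof. by rewrite /comm -exprSr exprS subrr. Qed.

Lemma uM (Op : unitRingType) (x y : Op) :
  x \is a GRing.unit -> y \is a GRing.unit -> x * y \is a GRing.unit.
Proof. by move=> ux uy; rewrite unitrMl. Qed.

Ltac closure :=
  repeat first [ assumption
               | apply: good_add | apply: good_mul | apply: good_expz
               | apply: good_exp | apply: good_m1 ].

Theorem proposition3p7 (Op : unitRingType) (S : PsdoData Op)
  (HS : PsdoAxioms S) (Phi hPhi : Op)
  (Hdress : BKP2_dressing S Phi hPhi) (Hflow : BKP2_flows S Phi hPhi)
  (m l k : nat) (Hk : odd k) (Bb : Op) :
  Bb = Bml S Phi hPhi m l \/ Bb = hBml S Phi hPhi m l ->
  dt S k Bb = comm (pplus S (LaxL S Phi ^+ k)) Bb /\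
  dth S k Bb = comm (- pminus S (LaxLh S hPhi ^+ k)) Bb.
Proof.
case: Hdress => uP uhP _ _ _.
have uD := D_unit HS.
have uDV : (Dop S)^-1 \is a GRing.unit by rewrite unitrV.
have uL : LaxL S Phi \is a GRing.unit by rewrite /LaxL !uM // unitrV.
have uhL : LaxLh S hPhi \is a GRing.unit by rewrite /LaxLh !uM // unitrV.
have k0 : k = k.-1.+1 by case: k Hk.
case: (Hflow k Hk) => f1 f2 f3 f4.
set L := LaxL S Phi in uL f1 f2 *; set hL := LaxLh S hPhi in uhL f2 f3 f4 *.
have Ldef : L = Phi * Dop S * Phi^-1 by [].
have hLdef : hL = hPhi * (Dop S)^-1 * hPhi^-1 by [].
have hLV : hL^-1 = hPhi * Dop S * hPhi^-1.
  by rewrite hLdef !invrM ?uM ?unitrV // !invrK mulrA.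
have Hdt := dt_der HS k; have Hdth := dth_der HS k.
have dtDV : dt S k (Dop S)^-1 = 0 by rewrite dV // dt_D // mulr0 mul0r oppr0.
have dthDV : dth S k (Dop S)^-1 = 0 by rewrite dV // dth_D // mulr0 mul0r oppr0.
set P := pplus S (L ^+ k).
set Q := - pminus S (hL ^+ k).
have eA : - pminus S (L ^+ k) = P - L ^+ k by rewrite /pminus opprB.
have eB : pplus S (hL ^+ k) = Q + hL ^+ k by rewrite /Q /pminus opprB subrK.
have gL : good (dt S k) P L.
  rewrite /good Ldef (d_conj Hdt _ _ _ uP f1) dt_D // mulr0 mul0r addr0 -Ldef eA.
  by rewrite comm_addl comm_oppl comm_self_exp oppr0 addr0.
have gM : good (dt S k) P (OSM S Phi).
  rewrite /good /OSM (d_conj Hdt _ _ _ uP f1) (Gam_dt HS) // eA comm_addl comm_oppl.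
  have -> : comm (L^+k) (Phi * Gam S * Phi^-1) = Phi * (k%:R * Dop S ^+ k.-1) * Phi^-1.
    rewrite Ldef conj_exp // comm_conj //.
    by have := comm_Dpow _ _ _ k.-1 (Gam_comm HS); rewrite -k0 => ->.
  by rewrite subrK.
have ghL : good (dt S k) P hL.
  rewrite /good hLdef (d_conj Hdt _ _ _ uhP f2) dtDV mulr0 mul0r addr0 -hLdef comm_addl.
  case: (k == 1) => /=; rewrite ?mulr1n ?mulr0n ?mul1r ?mul0r ?oppr0 ?comm0 ?addr0 //.
  by rewrite comm_oppl /comm mulVr // mulrV // subrr oppr0 addr0.
have ghM : good (dt S k) P (OSMh S hPhi).
  rewrite /good /OSMh (d_conj Hdt _ _ _ uhP f2) (hGam_dt HS) //.
  case: (k == 1) => /=; rewrite ?mulr1n ?mulr0n ?mul1r ?mul0r ?subr0 ?mulr0 ?mul0r ?addr0 //.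
  by rewrite comm_addl comm_oppl hLV comm_conj // (hGam_comm HS) !mulr1 mulrV // subrK.
have gL' : good (dth S k) Q L.
  by rewrite /good Ldef (d_conj Hdth _ _ _ uP f3) (dth_D HS) mulr0 mul0r addr0.
have gM' : good (dth S k) Q (OSM S Phi).
  by rewrite /good /OSM (d_conj Hdth _ _ _ uP f3) (Gam_dth HS) // mulr0 mul0r addr0.
have ghL' : good (dth S k) Q hL.
  by rewrite /good hLdef (d_conj Hdth _ _ _ uhP f4) dthDV mulr0 mul0r addr0 -hLdef eB comm_addl comm_self_exp addr0.
have ghM' : good (dth S k) Q (OSMh S hPhi).
  rewrite /good /OSMh (d_conj Hdth _ _ _ uhP f4) (hGam_dth HS) // eB comm_addl.
  have -> : comm (hL^+k) (hPhi * hGam S * hPhi^-1)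
      = - (hPhi * (k%:R * Dop S ^ (- (k.+1:int))) * hPhi^-1).
    rewrite hLdef conj_exp // comm_conj // comm_Dinvpow // ?(hGam_comm HS) // exprVn exprnN.
    by rewrite mulrN mulNr.
  by rewrite subrK.
move=> HB; split; case: HB => ->; rewrite /Bml /hBml; closure.
Qed.
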